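(* Let $\mathbf{Y}\sim\mathcal{SUT}_{d,m}(\boldsymbol{\xi},\boldsymbol{\Omega},\boldsymbol{\Delta},\boldsymbol{\tau},\bar{\boldsymbol{\Gamma}},\nu)$ and let $Q_{\mathbf{Y}}=(\mathbf{Y}-\boldsymbol{\xi})^\top\boldsymbol{\Omega}^{-1}(\mathbf{Y}-\boldsymbol{\xi})$. Let $\boldsymbol{\Lambda}=\boldsymbol{\Delta}^\top\bar{\boldsymbol{\Omega}}^{-1}$ and let $(\mathbf{U}_0^{*\top},\mathbf{U}_1^\top)^\top\sim\mathcal{T}_{m+d}\left(\mathbf{0},\begin{pmatrix}\bar{\boldsymbol{\Gamma}}-\boldsymbol{\Delta}^\top\bar{\boldsymbol{\Omega}}^{-1}\boldsymbol{\Delta}&\mathbf{0}\\ \mathbf{0}&\bar{\boldsymbol{\Omega}}\end{pmatrix},\nu\right)$ with $\mathbf{U}_0^*\in\mathbb{R}^m$, $\mathbf{U}_1\in\mathbb{R}^d$, and let $Q_{\mathbf{U}_1}=\mathbf{U}_1^\top\bar{\boldsymbol{\Omega}}^{-1}\mathbf{U}_1$ with density $f_{Q_{\mathbf{U}_1}}$. Then $Q_{\mathbf{Y}}$ has density $$f_{Q_{\mathbf{Y}}}(v)=f_{Q_{\mathbf{U}_1}}(v)\,\frac{\mathrm{P}(\mathbf{U}_0^*<\boldsymbol{\Lambda}\mathbf{U}_1+\boldsymbol{\tau}\mid Q_{\mathbf{U}_1}=v)}{\mathrm{P}(\mathbf{U}_0^*<\boldsymbol{\Lambda}\mathbf{U}_1+\boldsymbol{\tau})},\qquad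 v>0,$$ where inequalities between vectors are componentwise.
   Context: Notation: $\mathcal{T}_k(\boldsymbol{\mu},\boldsymbol{\Sigma},\nu)$ is the $k$-dimensional Student $t$ distribution with location $\boldsymbol{\mu}$, dispersion $\boldsymbol{\Sigma}$ and $\nu>0$ degrees of freedom. Parameters: $\boldsymbol{\xi}\in\mathbb{R}^d$; $\boldsymbol{\Omega}$ a $d\times d$ positive definite matrix, $\boldsymbol{\omega}=\mathrm{diag}(\boldsymbol{\Omega})^{1/2}$, $\bar{\boldsymbol{\Omega}}=\boldsymbol{\omega}^{-1}\boldsymbol{\Omega}\boldsymbol{\omega}^{-1}$; $\boldsymbol{\Delta}$ a $d\times m$ matrix; $\bar{\boldsymbol{\Gamma}}$ an $m\times m$ correlation matrix; $\boldsymbol{\tau}\in\mathbb{R}^m$; $\nu>0$; with $\bar{\boldsymbol{\Omega}}^*=\begin{pmatrix}\bar{\boldsymbol{\Gamma}}&\boldsymbol{\Delta}^\top\\ \boldsymbol{\Delta}&\bar{\boldsymbol{\Omega}}\end{pmatrix}$ positive definite. Definition: if $(\mathbf{U}_0^\top,\mathbf{U}_1^\top)^\top\sim\mathcal{T}_{m+d}(\mathbf{0},\bar{\boldsymbol{\Omega}}^*,\nu)$ ($\mathbf{U}_0\in\mathbb{R}^m$, $\mathbf{U}_1\in\mathbb{R}^d$) and $\mathbf{Z}$ has the conditional distribution of $\mathbf{U}_1$ given $\mathbf{U}_0+\boldsymbol{\tau}>\mathbf{0}$ (componentwise), then $\mathbf{Y}=\boldsymbol{\xi}+\boldsymbol{\omega}\mathbf{Z}$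 has distribution $\mathcal{SUT}_{d,m}(\boldsymbol{\xi},\boldsymbol{\Omega},\boldsymbol{\Delta},\boldsymbol{\tau},\bar{\boldsymbol{\Gamma}},\nu)$. *)

(* Defs.v *)
From HB Require Import structures.
From mathcomp Require Import all_boot all_order all_algebra.
From mathcomp Require Import all_classical all_reals all_analysis.

Set Implicit Arguments.
Unset Strict Implicit.
Unset Printing Implicit Defensive.

Import Order.TTheory GRing.Theory Num.Theory.
Import numFieldNormedType.Exports.

Local Open Scope classical_set_scope.
Local Open Scope ring_scope.

Section Defs.
Variable R : realType.

Definition posdef (k : nat) (A : 'M[R]_k) : Prop :=
  A^T = A /\ forall x : 'cV[R]_k, x != 0 -> 0 < (x^T *m A *m x) 0 0.

(** Borel sigma-algebra on R^k (column vectors): generated by the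
    coordinate maps, i.e. the product Borel sigma-algebra. *)
Definition mxBorel (k : nat) : set (set 'cV[R]_k) :=
  <<s [set A | exists (i : 'I_k) (B : set R),
         measurable B /\ A = (fun x : 'cV[R]_k => x i 0) @^-1` B] >>.

(** Lebesgue integral over R^k of a nonnegative function, as an iterated
    integral over the coordinates (Tonelli). *)
Fixpoint iint (k : nat) : ('cV[R]_k -> \bar R) -> \bar R :=
  match k return ('cV[R]_k -> \bar R) -> \bar R with
  | 0 => fun f => f 0
  | k'.+1 => fun f =>
      (\int[@lebesgue_measure R]_(x in [set: R])
         iint (fun v : 'cV[R]_k' =>
                 f (col_mx (const_mx x : 'cV[R]_1) v : 'cV[R]_k'.+1)))%E
  end.

Definition Gamma (s : R) : R :=
  fine (\int[@lebesgue_measure R]_(t in `]0%R, +oo[%classic)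
          (powR t (s - 1) * expR (- t))%:E)%E.

Definition t_density (k : nat) (mu : 'cV[R]_k) (Sigma : 'M[R]_k) (nu : R)
    (x : 'cV[R]_k) : R :=
  Gamma ((nu + k%:R) / 2) /
    (Gamma (nu / 2) * powR (nu * pi) (k%:R / 2) * Num.sqrt (\det Sigma)) *
  powR (1 + ((x - mu)^T *m invmx Sigma *m (x - mu)) 0 0 / nu)
       (- ((nu + k%:R) / 2)).

Section RV.
Context {dT : measure_display} {T : measurableType dT}.
Variable P : probability T R.

Definition random_vector (k : nat) (X : T -> 'cV[R]_k) : Prop :=
  forall B, mxBorel B -> measurable (X @^-1` B).

Definition has_t_law (k : nat) (X : T -> 'cV[R]_k) (mu : 'cV[R]_k)
    (Sigma : 'M[R]_k) (nu : R) : Prop :=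
  random_vector X /\
  forall B, mxBorel B ->
    P (X @^-1` B) = iint (fun x => ((\1_B x : R) * t_density mu Sigma nu x)%:E).

Definition omega_mx (d : nat) (Omega : 'M[R]_d) : 'M[R]_d :=
  diag_mx (\row_i Num.sqrt (Omega i i)).
Definition Omega_bar (d : nat) (Omega : 'M[R]_d) : 'M[R]_d :=
  invmx (omega_mx Omega) *m Omega *m invmx (omega_mx Omega).
Definition Omega_star (d m : nat) (Omega : 'M[R]_d) (Delta : 'M[R]_(d, m))
    (Gamma_bar : 'M[R]_m) : 'M[R]_(m + d) :=
  block_mx Gamma_bar Delta^T Delta (Omega_bar Omega).

(** Y ~ SUT_{d,m}(xi, Omega, Delta, tau, Gamma_bar, nu):
    Y has the law of xi + omega Z, where Z is distributed as U1 given
    U0 + tau > 0, with (U0, U1) ~ T_{m+d}(0, Omega_star, nu). *)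
Definition has_SUT_law (d m : nat) (Y : T -> 'cV[R]_d) (xi : 'cV[R]_d)
    (Omega : 'M[R]_d) (Delta : 'M[R]_(d, m)) (tau : 'cV[R]_m)
    (Gamma_bar : 'M[R]_m) (nu : R) : Prop :=
  let f := t_density (0 : 'cV[R]_(m + d)) (Omega_star Omega Delta Gamma_bar) nu in
  let C := [set u : 'cV[R]_(m + d) | forall i, 0 < (usubmx u + tau) i 0] in
  random_vector Y /\
  forall B, mxBorel B ->
    P (Y @^-1` B) =
      (fine (iint (fun u => ((\1_(C `&`
                 [set u | xi + omega_mx Omega *m dsubmx u \in B]) u : R) * f u)%:E))
       / fine (iint (fun u => ((\1_C u : R) * f u)%:E)))%:E.

End RV.
End Defs.

(* Main.v *)
Require Import Defs.
From HB Require Import structures.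
From mathcomp Require Import all_boot all_order all_algebra.
From mathcomp Require Import all_classical all_reals all_analysis.
From mathcomp Require Import measurable_realfun.
From mathcomp Require Import ring lra.
Import Order.TTheory GRing.Theory Num.Theory.
Import numFieldNormedType.Exports.
Local Open Scope classical_set_scope.
Local Open Scope ring_scope.
Section A.
Variable R : realType.
Notation leb := (@lebesgue_measure R).

Definition mxgen (k : nat) : set (set 'cV[R]_k) :=
  [set A | exists (i : 'I_k) (B : set R),
         measurable B /\ A = (fun x : 'cV[R]_k => x i 0) @^-1` B].
Definition Vec k := g_sigma_algebraType (mxgen k).

Lemma mcoord {k} (i : 'I_k) : measurable_fun setT (fun v : Vec k => v i 0).
Proof.
move=> _ B mB; rewrite setTI; apply: sub_sigma_algebra; by exists i, B.
Qed.

Lemma mvec dX (X : measurableType dX) k (h : X -> Vec k) :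
  (forall i, measurable_fun setT (fun x => h x i 0)) -> measurable_fun setT h.
Proof.
move=> hi; apply: (@measurability _ _ _ _ setT h (mxgen k)) => //.
move=> _ [_ [i [B [mB ->]]] <-].
have := hi i measurableT B mB. by [].
Qed.

Lemma iint_ge0 k (f : 'cV[R]_k -> \bar R) : (forall x, (0 <= f x)%E) -> (0 <= iint f)%E.
Proof.
elim: k f => [|k IH] f f0 /=; first exact: f0.
apply: integral_ge0 => x _; exact: IH.
Qed.

Lemma col_mx_coord k (a : 'cV[R]_1) (v : 'cV[R]_k) (i : 'I_(1 + k)) :
  (col_mx a v) i 0 = match fintype.split i with inl j => a j 0 | inr j => v j 0 end.
Proof. by rewrite /col_mx mxE. Qed.


Lemma mcolR k : measurable_fun setT
  (fun p : R * Vec k => (col_mx (const_mx p.1 : 'cV[R]_1) p.2 : Vec k.+1)).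
Proof.
apply: mvec => i /=.
under eq_fun do rewrite (@col_mx_coord k).
case: (@fintype.split 1 k i) => j.
  under eq_fun do rewrite mxE. exact: measurable_fst.
exact: (measurableT_comp (mcoord j) measurable_snd).
Qed.

Lemma mcolmx m d : measurable_fun setT
  (fun p : Vec m * Vec d => (col_mx p.1 p.2 : Vec (m + d))).
Proof.
apply: mvec => i /=.
under eq_fun do rewrite /col_mx mxE.
case: (fintype.split i) => j.
  exact: (measurableT_comp (mcoord j) measurable_fst).
exact: (measurableT_comp (mcoord j) measurable_snd).
Qed.

Lemma iint_meas k : forall dX (X : measurableType dX) (phi : X * Vec k -> \bar R),
  measurable_fun setT phi -> (forall z, (0 <= phi z)%E) ->
  measurable_fun setT (fun x => iint (fun v => phi (x, v))).
Proof.
elim: k => [|k IH] dX X phi mphi phi0 /=.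
  apply: (measurableT_comp mphi).
  apply: measurable_fun_pair; [exact: measurable_id | exact: measurable_cst].
pose psi := fun p : X * R => iint (fun v : 'cV[R]_k => phi (p.1, col_mx (const_mx p.2 : 'cV[R]_1) v)).
have mpsi : measurable_fun setT psi.
  apply: (IH _ (X * R)%type (fun q : (X * R) * Vec k => phi (q.1.1, col_mx (const_mx q.1.2 : 'cV[R]_1) q.2))) => //.
  apply: (measurableT_comp mphi).
  apply: measurable_fun_pair.
    exact: (measurableT_comp measurable_fst measurable_fst).
  have mg : measurable_fun setT (fun q : (X * R) * Vec k => (q.1.2, q.2)).
    apply: measurable_fun_pair; last exact: measurable_snd.
    exact: (measurableT_comp measurable_snd measurable_fst).
  exact: (measurableT_comp (mcolR k) mg).
have psi0 : forall p, (0 <= psi p)%E by move=> p; apply: iint_ge0.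
exact: (measurable_fun_fubini_tonelli_F (m2 := leb) psi mpsi psi0).
Qed.


Lemma mshift dX (X : measurableType dX) k (phi : X * Vec k.+1 -> \bar R) :
  measurable_fun setT phi ->
  measurable_fun setT (fun q : (X * R) * Vec k =>
     phi (q.1.1, col_mx (const_mx q.1.2 : 'cV[R]_1) q.2)).
Proof.
move=> mphi; apply: (measurableT_comp mphi).
apply: measurable_fun_pair.
  exact: (measurableT_comp measurable_fst measurable_fst).
have mg : measurable_fun setT (fun q : (X * R) * Vec k => (q.1.2, q.2)).
  apply: measurable_fun_pair; last exact: measurable_snd.
  exact: (measurableT_comp measurable_snd measurable_fst).
exact: (measurableT_comp (mcolR k) mg).
Qed.

Lemma mfix1 k (psi : R * Vec k.+1 -> \bar R) (y : R) :
  measurable_fun setT psi ->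
  measurable_fun setT (fun p : R * Vec k => psi (p.1, col_mx (const_mx y : 'cV[R]_1) p.2)).
Proof.
move=> mpsi; apply: (measurableT_comp mpsi).
apply: measurable_fun_pair; first exact: measurable_fst.
have mg : measurable_fun setT (fun p : R * Vec k => (y, p.2)).
  apply: measurable_fun_pair; last exact: measurable_snd.
  exact: measurable_cst.
exact: (measurableT_comp (mcolR k) mg).
Qed.

Lemma iint_swap1 k : forall (psi : R * Vec k -> \bar R),
  measurable_fun setT psi -> (forall z, (0 <= psi z)%E) ->
  (\int[leb]_(x in setT) iint (fun b => psi (x, b)))%E =
  iint (fun b => \int[leb]_(x in setT) psi (x, b))%E.
Proof.
elim: k => [|k IH] psi mpsi psi0; first by [].
rewrite /=.
pose F := fun p : R * R => iint (fun b : 'cV[R]_k => psi (p.1, col_mx (const_mx p.2 : 'cV[R]_1) b)).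
have mF : measurable_fun setT F.
  apply: (@iint_meas k _ _ (fun q : (R * R) * Vec k =>
     psi (q.1.1, col_mx (const_mx q.1.2 : 'cV[R]_1) q.2))).
    exact: mshift.
  by move=> z; apply: psi0.
have F0 : forall p, (0 <= F p)%E by move=> p; apply: iint_ge0.
have H := @fubini_tonelli _ _ (measurableTypeR R) (measurableTypeR R) R leb leb F mF F0.
rewrite /F /= in H; rewrite H.
apply: eq_integral => y _.
apply: (IH (fun p : R * Vec k => psi (p.1, col_mx (const_mx y : 'cV[R]_1) p.2))).
  exact: mfix1.
by move=> z; apply: psi0.
Qed.

Lemma iint_swap m d : forall (phi : Vec m * Vec d -> \bar R),
  measurable_fun setT phi -> (forall z, (0 <= phi z)%E) ->
  iint (fun a : 'cV[R]_m => iint (fun b : 'cV[R]_d => phi (a, b))) =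
  iint (fun b : 'cV[R]_d => iint (fun a : 'cV[R]_m => phi (a, b))).
Proof.
elim: m => [|m IH] phi mphi phi0; first by [].
rewrite /=.
transitivity (\int[leb]_(x in setT) iint (fun b : 'cV[R]_d =>
   iint (fun a : 'cV[R]_m => phi (col_mx (const_mx x : 'cV[R]_1) a, b))))%E.
  apply: eq_integral => x _.
  apply: (IH (fun p : Vec m * Vec d => phi (col_mx (const_mx x : 'cV[R]_1) p.1, p.2))).
    apply: (measurableT_comp mphi).
    apply: measurable_fun_pair; last exact: measurable_snd.
    have mg : measurable_fun setT (fun p : Vec m * Vec d => (x, p.1)).
      apply: measurable_fun_pair; last exact: measurable_fst.
      exact: measurable_cst.
    exact: (measurableT_comp (mcolR m) mg).
  by move=> z; apply: phi0.
pose psi := fun p : R * Vec d => iint (fun a : 'cV[R]_m => phi (col_mx (const_mx p.1 : 'cV[R]_1) a, p.2)).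
have mpsi : measurable_fun setT psi.
  apply: (@iint_meas m _ _ (fun q : (R * Vec d) * Vec m => phi (col_mx (const_mx q.1.1 : 'cV[R]_1) q.2, q.1.2))).
    apply: (measurableT_comp mphi).
    apply: measurable_fun_pair; last first.
      exact: (measurableT_comp measurable_snd measurable_fst).
    have mg : measurable_fun setT (fun q : (R * Vec d) * Vec m => (q.1.1, q.2)).
      apply: measurable_fun_pair; last exact: measurable_snd.
      exact: (measurableT_comp measurable_fst measurable_fst).
    exact: (measurableT_comp (mcolR m) mg).
  by move=> z; apply: phi0.
have psi0 : forall z, (0 <= psi z)%E by move=> z; apply: iint_ge0.

exact: (@iint_swap1 d psi mpsi psi0).
Qed.


Lemma iintS k (f : 'cV[R]_k.+1 -> \bar R) :
  iint f = (\int[leb]_(x in setT) iint (fun v : 'cV[R]_k => f (col_mx (const_mx x : 'cV[R]_1) v)))%E.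
Proof. by []. Qed.

Lemma col_mx0v d (b : 'cV[R]_d) : col_mx (0 : 'cV[R]_0) b = b.
Proof.
apply/matrixP => i j; rewrite /col_mx mxE.
case: splitP => [[] //|k /= ik].
by congr (b _ _); apply: val_inj.
Qed.

Lemma iint_split m d : forall (h : 'cV[R]_(m + d) -> \bar R),
  iint h = iint (fun a : 'cV[R]_m => iint (fun b : 'cV[R]_d => h (col_mx a b))).
Proof.
elim: m => [|m IH] h.
  by rewrite /=; congr iint; apply/funext => b; rewrite col_mx0v.
rewrite (@iintS (m + d)) /=.
apply: eq_integral => x _.
rewrite (IH (fun v => h (col_mx (const_mx x : 'cV[R]_1) v))).
congr iint; apply/funext => a; congr iint; apply/funext => b.
by rewrite col_mxA castmx_id.
Qed.


Lemma integral_refl (G : R -> \bar R) (c : R) :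
  measurable_fun setT G -> (forall x, (0 <= G x)%E) ->
  (\int[leb]_(x in setT) G (c - x)%R)%E = (\int[leb]_(x in setT) G x)%E.
Proof.
move=> mG G0.
pose phi : measurableTypeR R -> measurableTypeR R := fun x => (c - (x : R))%R.
have mphi : measurable_fun setT phi.
  exact (@measurable_funB _ (measurableTypeR R) R setT (cst c) idfun (measurable_cst c) (@measurable_id _ (measurableTypeR R) setT)).
have E : forall A, measurable A -> leb A = pushforward leb phi A.
  move=> A mA; apply: (@lebesgue_measure_unique R (pushforward leb phi)) => //.
  move=> _ [[a b] _ <-] /=.
  change (leb `]a, b]%classic = leb (phi @^-1` `]a, b]%classic)).
  have -> : phi @^-1` `]a, b]%classic = `[c - b, c - a[%classic.
    apply/seteqP; split => x /=; rewrite !in_itv /= => /andP[h1 h2];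
      apply/andP; split; rewrite /phi in h1 h2 *; lra.
  rewrite !lebesgue_measure_itv /= !lte_fin.
  have -> : (c - b < c - a) = (a < b) by apply/idP/idP => h; lra.
  by case: ifP => // _; rewrite -EFinB; congr EFin; ring.
rewrite [RHS](eq_measure_integral (pushforward leb phi)); last first.
  by move=> A mA _; exact: E.
by rewrite ge0_integral_pushforward //=.
Qed.


Lemma col_sub_decomp k (c : 'cV[R]_k.+1) (x : R) (v : 'cV[R]_k) :
  c - col_mx (const_mx x : 'cV[R]_1) v =
  col_mx (const_mx (c 0 0 - x) : 'cV[R]_1) (dsubmx (c : 'cV[R]_(1 + k)) - v).
Proof.
apply/matrixP => i j; rewrite !ord1 !mxE.
case: (@splitP 1 k i) => l il; rewrite !mxE.
  rewrite (ord1 l) /= in il; congr (c _ _ - x); exact: val_inj.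
by congr (c _ _ - _); apply: val_inj; rewrite /= il.
Qed.

Lemma mcolfix k (y : R) : measurable_fun setT
  (fun v : Vec k => (col_mx (const_mx y : 'cV[R]_1) v : Vec k.+1)).
Proof.
have mg : measurable_fun setT (fun v : Vec k => (y, v)).
  apply: measurable_fun_pair; [exact: measurable_cst | exact: measurable_id].
exact: (measurableT_comp (mcolR k) mg).
Qed.

Lemma iint_refl m : forall (phi : Vec m -> \bar R) (c : 'cV[R]_m),
  measurable_fun setT phi -> (forall z, (0 <= phi z)%E) ->
  iint (fun a : 'cV[R]_m => phi (c - a)) = iint phi.
Proof.
elim: m => [|m IH] phi c mphi phi0.
  by rewrite /= (flatmx0 c) subr0.
rewrite /=.
pose G := fun y : R => iint (fun v : 'cV[R]_m => phi (col_mx (const_mx y : 'cV[R]_1) v)).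
transitivity (\int[leb]_(x in setT) G (c 0 0 - x)%R)%E.
  apply: eq_integral => x _.
  under eq_fun do rewrite col_sub_decomp.
  apply: (IH (fun v : Vec m => phi (col_mx (const_mx (c 0 0 - x) : 'cV[R]_1) v))).
    exact: (measurableT_comp mphi (mcolfix _ _)).
  by move=> z; apply: phi0.
apply: integral_refl.
  apply: (@iint_meas m _ R (fun q : R * Vec m => phi (col_mx (const_mx q.1 : 'cV[R]_1) q.2))).
    exact: (measurableT_comp mphi (mcolR m)).
  by move=> z; apply: phi0.
by move=> y; apply: iint_ge0.
Qed.


Lemma mcoordf dX (X : measurableType dX) k (f : X -> Vec k) (i : 'I_k) :
  measurable_fun setT f -> measurable_fun setT (fun x => f x i 0).
Proof. by move=> mf; exact: (measurableT_comp (mcoord i) mf). Qed.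

Lemma mmul dX (X : measurableType dX) k k' (A : 'M[R]_(k', k)) (f : X -> Vec k) :
  measurable_fun setT f -> measurable_fun setT (fun x => (A *m f x : Vec k')).
Proof.
move=> mf; apply: mvec => i.
under eq_fun do rewrite mxE.
apply: measurable_sum => j.
apply: measurable_funM; first exact: measurable_cst.
exact: mcoordf.
Qed.

Lemma msubv dX (X : measurableType dX) k (f g : X -> Vec k) :
  measurable_fun setT f -> measurable_fun setT g ->
  measurable_fun setT (fun x => (f x - g x : Vec k)).
Proof.
move=> mf mg; apply: mvec => i.
under eq_fun do rewrite !mxE.
by apply: measurable_funB; exact: mcoordf.
Qed.

Lemma iint_cov m d (Lam : 'M[R]_(m, d)) (h : Vec (m + d) -> \bar R) :
  measurable_fun setT h -> (forall z, (0 <= h z)%E) ->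
  iint (fun u : 'cV[R]_(m + d) => h (col_mx (Lam *m dsubmx u - usubmx u) (dsubmx u))) =
  iint h.
Proof.
move=> mh h0.
rewrite iint_split [RHS]iint_split.
under eq_fun do under eq_fun do rewrite col_mxKu col_mxKd.
have mp1 : measurable_fun setT (fun p : Vec m * Vec d => h (col_mx (Lam *m p.2 - p.1) p.2)).
  apply: (measurableT_comp mh).
  have mg : measurable_fun setT (fun p : Vec m * Vec d => ((Lam *m p.2 - p.1 : Vec m), p.2)).
    apply: measurable_fun_pair; last exact: measurable_snd.
    apply: msubv; last exact: measurable_fst.
    apply: mmul; exact: measurable_snd.
  exact: (measurableT_comp (mcolmx m d) mg).
have E1 := @iint_swap m d (fun p : Vec m * Vec d => h (col_mx (Lam *m p.2 - p.1) p.2)) mp1 (fun z => h0 _).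
rewrite /= in E1; rewrite E1; clear E1.
have mp2 : measurable_fun setT (fun p : Vec m * Vec d => h (col_mx p.1 p.2)).
  exact: (measurableT_comp mh (mcolmx m d)).
have E2 := @iint_swap m d (fun p : Vec m * Vec d => h (col_mx p.1 p.2)) mp2 (fun z => h0 _).
rewrite /= in E2; rewrite E2; clear E2.
congr iint; apply/funext => b.
apply: (@iint_refl m (fun a : Vec m => h (col_mx a b))).
  have mg : measurable_fun setT (fun a : Vec m => (a, (b : Vec d))).
    apply: measurable_fun_pair; [exact: measurable_id | exact: measurable_cst].
  exact: (measurableT_comp mp2 mg).
by move=> z; apply: h0.
Qed.

End A.
Section B.
Variable R : realType.

Lemma invmx_uniq' n (A B : 'M[R]_n) : B *m A = 1%:M -> A \in unitmx -> invmx A = B.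
Proof.
move=> BA uA.
by rewrite -[invmx A]mul1mx -BA -mulmxA mulmxV // mulmx1.
Qed.

Lemma invmxM' n (A B : 'M[R]_n) : A \in unitmx -> B \in unitmx ->
  invmx (A *m B) = invmx B *m invmx A.
Proof.
move=> uA uB; apply: invmx_uniq'; last by rewrite unitmx_mul uA uB.
by rewrite mulmxA -[invmx B *m invmx A *m A]mulmxA mulVmx // mulmx1 mulVmx.
Qed.

Lemma posdef_unit k (A : 'M[R]_k) : posdef A -> A \in unitmx.
Proof.
move=> [_ hA]; rewrite unitmxE unitfE; apply/negP => /det0P [v v0 vA].
have := hA v^T; rewrite trmx_eq0 => /(_ v0).
by rewrite trmxK vA mul0mx mxE ltxx.
Qed.

Lemma posdef_diag k (A : 'M[R]_k) i : posdef A -> 0 < A i i.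
Proof.
move=> [_ hA]; have := hA (delta_mx i 0).
have nz : delta_mx i 0 != 0 :> 'cV[R]_k.
  apply/negP => /eqP /matrixP /(_ i 0); rewrite !mxE !eqxx /= => /eqP.
  by rewrite oner_eq0.
move=> /(_ nz).
by rewrite trmx_delta -rowE -colE !mxE.
Qed.

Lemma trmx_inv_sym k (A : 'M[R]_k) : A^T = A -> (invmx A)^T = invmx A.
Proof. by move=> h; rewrite trmx_inv h. Qed.

Section Om.
Variable d : nat.
Variable Omega : 'M[R]_d.
Hypothesis hO : posdef Omega.

Lemma omega_unit : omega_mx Omega \in unitmx.
Proof.
rewrite unitmxE /omega_mx det_diag unitfE; apply/lt0r_neq0/prodr_gt0 => i _.
by rewrite mxE sqrtr_gt0 posdef_diag.
Qed.

Lemma omega_tr : (omega_mx Omega)^T = omega_mx Omega.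
Proof. exact: tr_diag_mx. Qed.

Lemma Omega_unit : Omega \in unitmx.
Proof. exact: posdef_unit. Qed.

Lemma Ob_unit : Omega_bar Omega \in unitmx.
Proof.
by rewrite /Omega_bar !unitmx_mul unitmx_inv omega_unit Omega_unit.
Qed.

Lemma Ob_tr : (Omega_bar Omega)^T = Omega_bar Omega.
Proof.
rewrite /Omega_bar !trmx_mul !trmx_inv omega_tr hO.1 mulmxA //.
Qed.

Lemma Ob_inv : invmx (Omega_bar Omega) = omega_mx Omega *m invmx Omega *m omega_mx Omega.
Proof.
have uw := omega_unit; have uO := Omega_unit.
rewrite /Omega_bar invmxM' ?unitmx_mul ?unitmx_inv ?uw ?uO //.
rewrite invmxM' ?unitmx_inv ?uw ?uO // !invmxK mulmxA //.
Qed.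

Lemma quad_ge0 (b : 'cV[R]_d) : 0 <= (b^T *m invmx (Omega_bar Omega) *m b) 0 0.
Proof.
rewrite Ob_inv.
set w := omega_mx Omega *m b.
have -> : b^T *m (omega_mx Omega *m invmx Omega *m omega_mx Omega) *m b =
          w^T *m invmx Omega *m w.
  by rewrite /w trmx_mul omega_tr !mulmxA.
set z := invmx Omega *m w.
have -> : w^T *m invmx Omega *m w = z^T *m Omega *m z.
  rewrite /z [X in _ = X *m _ *m _]trmx_mul trmx_inv_sym ?hO.1 //.
  rewrite !mulmxA -[_ *m invmx Omega *m Omega]mulmxA mulVmx ?Omega_unit //.
  by rewrite mulmx1.
have [->|nz] := eqVneq z 0; first by rewrite mulmx0 mxE.
by apply/ltW; apply: hO.2.
Qed.

Lemma quad_Y (xi b : 'cV[R]_d) :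
  ((xi + omega_mx Omega *m b - xi)^T *m invmx Omega *m (xi + omega_mx Omega *m b - xi)) 0 0
  = (b^T *m invmx (Omega_bar Omega) *m b) 0 0.
Proof.
have -> : xi + omega_mx Omega *m b - xi = omega_mx Omega *m b by rewrite addrC addKr.
by rewrite Ob_inv trmx_mul omega_tr !mulmxA.
Qed.

End Om.
End B.
Section Blk.
Variable R : realType.
Variables (d m : nat) (Omega : 'M[R]_d) (Delta : 'M[R]_(d, m)) (Gam : 'M[R]_m).
Hypothesis hO : posdef Omega.
Hypothesis hS : posdef (Omega_star Omega Delta Gam).

Let Ob := Omega_bar Omega.
Definition Lam : 'M[R]_(m, d) := Delta^T *m invmx (Omega_bar Omega).
Definition Mx : 'M[R]_(m + d) := block_mx (- 1%:M) Lam 0 1%:M.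
Definition Dm : 'M[R]_(m + d) :=
  block_mx (Gam - Delta^T *m invmx (Omega_bar Omega) *m Delta) 0 0 (Omega_bar Omega).

Lemma MxMx : Mx *m Mx = 1%:M.
Proof.
rewrite /Mx mulmx_block !mulmxN !mulNmx !mulmx1 !mul1mx !mulmx0 !mul0mx.
by rewrite opprK !addr0 add0r addNr oppr0 -scalar_mx_block.
Qed.

Lemma Mx_tr : Mx^T = block_mx (- 1%:M) 0 Lam^T 1%:M.
Proof.
rewrite /Mx tr_block_mx trmx0 trmx1; congr block_mx.
by apply/matrixP => i j; rewrite !mxE eq_sym.
Qed.

Lemma MxMxT : Mx^T *m Mx^T = 1%:M.
Proof. by rewrite -trmx_mul MxMx trmx1. Qed.

Lemma Mx_unit : Mx \in unitmx.
Proof. by case: (mulmx1_unit MxMx). Qed.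

Lemma Mx_inv : invmx Mx = Mx.
Proof. apply: invmx_uniq'; [exact: MxMx | exact: Mx_unit]. Qed.

Lemma MxT_inv : invmx Mx^T = Mx^T.
Proof. by rewrite -trmx_inv Mx_inv. Qed.

Lemma Lam_tr : Lam^T = invmx Ob *m Delta.
Proof. by rewrite /Lam trmx_mul trmxK trmx_inv_sym // (@Ob_tr _ _ _ hO). Qed.

Lemma MOMT : Mx *m Omega_star Omega Delta Gam *m Mx^T = Dm.
Proof.
have uO := @Ob_unit _ _ _ hO.
rewrite Mx_tr /Mx /Omega_star mulmx_block.
rewrite !mulNmx !mul1mx !mul0mx !add0r.
have -> : Lam *m Omega_bar Omega = Delta^T.
  by rewrite /Lam -mulmxA mulVmx // mulmx1.
rewrite addNr mulmx_block !mulmxN !mulmx1 !mulmx0 !addr0 !mul0mx !addr0.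
rewrite Lam_tr mulmxA mulmxV // mul1mx addNr add0r opprD opprK.
by rewrite /Dm /Lam addrC.
Qed.

Lemma Os_eq : Omega_star Omega Delta Gam = Mx *m Dm *m Mx^T.
Proof.
rewrite -MOMT !mulmxA MxMx mul1mx -mulmxA MxMxT mulmx1 //.
Qed.

Lemma Os_unit : Omega_star Omega Delta Gam \in unitmx.
Proof. exact: posdef_unit. Qed.

Lemma Dm_unit : Dm \in unitmx.
Proof. by rewrite -MOMT !unitmx_mul unitmx_tr Mx_unit Os_unit. Qed.

Lemma Os_inv : invmx (Omega_star Omega Delta Gam) = Mx^T *m invmx Dm *m Mx.
Proof.
have uM := Mx_unit; have uD := Dm_unit.
rewrite Os_eq invmxM' ?unitmx_mul ?unitmx_tr ?uM ?uD //.
by rewrite invmxM' ?uM ?uD // MxT_inv Mx_inv mulmxA.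
Qed.

Lemma det_Mx : \det Mx = (- 1) ^+ m.
Proof.
rewrite /Mx det_ublock det1 mulr1.
have -> : - 1%:M = (-1)%:M :> 'M[R]_m by rewrite raddfN.
by rewrite det_scalar.
Qed.

Lemma det_Os : \det (Omega_star Omega Delta Gam) = \det Dm.
Proof.
rewrite Os_eq !det_mulmx det_tr det_Mx mulrC mulrA.
by rewrite -exprMn mulrNN mulr1 expr1n mul1r.
Qed.

Lemma Mx_col (u : 'cV[R]_(m + d)) :
  Mx *m u = col_mx (Lam *m dsubmx u - usubmx u) (dsubmx u).
Proof.
rewrite -{1}(vsubmxK u) /Mx mul_block_col mulNmx !mul1mx mul0mx add0r.
by rewrite addrC.
Qed.

Lemma t_density_cov (nu : R) (u : 'cV[R]_(m + d)) :
  t_density 0 (Omega_star Omega Delta Gam) nu u = t_density 0 Dm nu (Mx *m u).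
Proof.
rewrite /t_density det_Os !subr0 Os_inv.
by rewrite trmx_mul !mulmxA.
Qed.

End Blk.
Section D.
Variable R : realType.
Notation leb := (@lebesgue_measure R).
Lemma itvE (v : R) : (v \in `]0, +oo[%classic) = (0 < v).
Proof. by rewrite mem_setE in_itv /= andbT. Qed.

Local Open Scope ereal_scope.

Lemma final_step (fQ g : R -> R) (c : R) (B : set R) :
  measurable_fun setT fQ -> measurable_fun setT g -> measurable B ->
  (forall D, measurable D -> 0 <= \int[leb]_(v in D) (g v * fQ v)%:E) ->
  (forall D, measurable D -> \int[leb]_(v in D) (g v * fQ v)%:E < +oo) ->
  (forall D, measurable D -> \int[leb]_(v in D) (g v * fQ v)%:E =
                           \int[leb]_(v in D `&` `]0%R, +oo[) (g v * fQ v)%:E) ->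
  ((fine (\int[leb]_(v in B) (g v * fQ v)%:E) / c)%R)%:E =
   \int[leb]_(v in B) (if (0 < v)%R then (fQ v * g v / c)%R else 0%R)%:E.
Proof.
move=> mfQ mg mB Ige0 Ifin Ipos.
pose k v := if (0 < v)%R then (g v * fQ v)%R else 0%R.
have mk : measurable_fun setT k.
  have -> : k = (fun v => \1_(`]0%R, +oo[%classic) v * (g v * fQ v))%R.
    apply/funext => v; rewrite /k indicE itvE.
    by case: (0 < v)%R; rewrite ?mul1r ?mul0r.
  apply: measurable_funM; first exact: measurable_indic.
  exact: measurable_funM.
have J : forall D, measurable D -> \int[leb]_(v in D) (k v)%:E =
    \int[leb]_(v in D `&` `]0%R, +oo[) (g v * fQ v)%:E.
  move=> D mD; rewrite integral_mkcond [RHS]integral_mkcond.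
  apply: eq_integral => v _; rewrite /patch /k in_setI itvE.
  by case: (v \in D); case: (0 < v)%R.
have Jge0 : forall D, measurable D -> 0 <= \int[leb]_(v in D) (k v)%:E.
  move=> D mD; rewrite J //; apply: Ige0; exact: measurableI.
have Jfin : forall D, measurable D -> \int[leb]_(v in D) (k v)%:E < +oo.
  move=> D mD; rewrite J //; apply: Ifin; exact: measurableI.
have [->|c0] := eqVneq c 0%R.
  have i0 : ((0 : R)^-1 = 0)%R by exact: invr0.
  rewrite i0 GRing.mulr0 integral0_eq // => v _.
  by rewrite GRing.mulr0 if_same.
transitivity (\int[leb]_(v in B) ((k v)%:E * (c^-1)%:E)); last first.
  apply: eq_integral => v _; rewrite /k; case: (0 < v)%R.
    by rewrite -EFinM (mulrC (g v)).
  by rewrite mul0e.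
rewrite integralZr //; last first.
  apply/integrableP; split.
    exact/measurable_EFinP/measurable_funTS.
  pose N := [set v | (k v < 0)%R].
  have mN : measurable N.
    have h := mk measurableT _ (measurable_itv `]-oo, 0%R[).
    rewrite setTI in h.
    have -> : N = k @^-1` `]-oo, 0%R[ by apply/seteqP; split => v /=; rewrite in_itv.
    exact: h.
  rewrite -(setUIDK B N) ge0_integral_setU //; first last.
  - by apply/disj_setPS => v [[_ h1] [_ h2]].
  - apply: measurable_funTS; apply: measurableT_comp => //.
    exact/measurable_EFinP.
  - exact: measurableD.
  - exact: measurableI.
  apply: lte_add_pinfty.
    have -> : \int[leb]_(v in B `&` N) `|(k v)%:E| =
              \int[leb]_(v in B `&` N) (- k v)%:E.
      apply: eq_integral => v; rewrite inE => -[_ Nv].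
      by rewrite abse_EFin ltr0_norm.
    have h := @integral_ge0N _ _ _ leb (B `&` N) (fun v => (- k v)%:E).
    have : \int[leb]_(v in B `&` N) (- k v)%:E <= 0.
      rewrite -oppe_ge0 -h; last by move=> v [_ Nv]; rewrite lee_fin oppr_ge0 ltW.
      under eq_integral do rewrite -EFinN opprK.
      apply: Jge0; exact: measurableI.
    by move=> h0; apply: (le_lt_trans h0).
  have -> : \int[leb]_(v in B `\` N) `|(k v)%:E| =
            \int[leb]_(v in B `\` N) (k v)%:E.
    apply: eq_integral => v; rewrite inE => -[_ Nv].
    rewrite abse_EFin ger0_norm //; rewrite leNgt; apply/negP => h; exact: Nv.
  apply: Jfin; exact: measurableD.
rewrite J // -Ipos //.
have := Ifin B mB; have := Ige0 B mB.
by case: (\int[leb]_(v in B) (g v * fQ v)%:E) => // r _ _.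
Qed.

End D.
Section C1.
Variable R : realType.
Notation Vec := (@Vec R).

Lemma musub m d : measurable_fun setT (fun w : Vec (m + d) => (usubmx w : Vec m)).
Proof.
apply: mvec => i; under eq_fun do rewrite mxE.
exact: mcoord.
Qed.

Lemma mdsub m d : measurable_fun setT (fun w : Vec (m + d) => (dsubmx w : Vec d)).
Proof.
apply: mvec => i; under eq_fun do rewrite mxE.
exact: mcoord.
Qed.

Lemma maddc dX (X : measurableType dX) k (f : X -> Vec k) (c : 'cV[R]_k) :
  measurable_fun setT f -> measurable_fun setT (fun x => (f x + c : Vec k)).
Proof.
move=> mf; apply: mvec => i; under eq_fun do rewrite mxE.
apply: measurable_funD; [exact: mcoordf | exact: measurable_cst].
Qed.

Lemma msubc dX (X : measurableType dX) k (f : X -> Vec k) (c : 'cV[R]_k) :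
  measurable_fun setT f -> measurable_fun setT (fun x => (f x - c : Vec k)).
Proof.
move=> mf; apply: mvec => i; under eq_fun do rewrite !mxE.
apply: measurable_funB; [exact: mcoordf | exact: measurable_cst].
Qed.

Lemma quad_sum k (M : 'M[R]_k) (v : 'cV[R]_k) :
  (v^T *m M *m v) 0 0 = \sum_j (M^T *m v) j 0 * v j 0.
Proof.
rewrite mxE; apply: eq_bigr => j _; congr (_ * _); rewrite !mxE.
by apply: eq_bigr => i _; rewrite !mxE mulrC.
Qed.

Lemma mquad dX (X : measurableType dX) k (M : 'M[R]_k) (f : X -> Vec k) :
  measurable_fun setT f -> measurable_fun setT (fun x => ((f x)^T *m M *m f x) 0 0).
Proof.
move=> mf; under eq_fun do rewrite quad_sum.
apply: measurable_sum => j; apply: measurable_funM; apply: mcoordf => //.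
exact: mmul.
Qed.

Lemma mtd k (mu : 'cV[R]_k) (S : 'M[R]_k) (nu : R) :
  measurable_fun setT (fun x : Vec k => t_density mu S nu x).
Proof.
rewrite /t_density; apply: measurable_funM; first exact: measurable_cst.
apply: (measurableT_comp (measurable_powR _)).
apply: measurable_funD; first exact: measurable_cst.
apply: measurable_funM; last exact: measurable_cst.
apply: mquad; apply: msubc; exact: measurable_id.
Qed.

Lemma Gamma_ge0 (s : R) : 0 <= Gamma s.
Proof.
rewrite /Gamma; apply: fine_ge0; apply: integral_ge0 => t _.
by rewrite lee_fin mulr_ge0 ?powR_ge0 ?expR_ge0.
Qed.

Lemma td_ge0 k (mu : 'cV[R]_k) (S : 'M[R]_k) (nu : R) x :
  0 <= nu -> 0 <= t_density mu S nu x.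
Proof.
move=> nu0; rewrite /t_density; apply: mulr_ge0; last exact: powR_ge0.
apply: divr_ge0; first exact: Gamma_ge0.
by rewrite !mulr_ge0 ?Gamma_ge0 ?powR_ge0 ?sqrtr_ge0.
Qed.

End C1.
Theorem proposition8 (R : realType) (d m : nat)
    (xi : 'cV[R]_d) (Omega : 'M[R]_d) (Delta : 'M[R]_(d, m))
    (tau : 'cV[R]_m) (Gamma_bar : 'M[R]_m) (nu : R)
    (hOmega : posdef Omega)
    (hGamma_sym : Gamma_bar^T = Gamma_bar)
    (hGamma_diag : forall i, Gamma_bar i i = 1)
    (hstar : posdef (Omega_star Omega Delta Gamma_bar))
    (hnu : 0 < nu)
    (* Y ~ SUT_{d,m}(xi, Omega, Delta, tau, Gamma_bar, nu) *)
    (dT : measure_display) (T : measurableType dT) (P : probability T R)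
    (Y : T -> 'cV[R]_d)
    (hY : has_SUT_law P Y xi Omega Delta tau Gamma_bar nu)
    (* (U0*, U1) ~ T_{m+d}(0, diag(Gamma_bar - Delta^T Omega_bar^-1 Delta, Omega_bar), nu) *)
    (dT' : measure_display) (T' : measurableType dT') (P' : probability T' R)
    (W : T' -> 'cV[R]_(m + d))
    (hW : has_t_law P' W 0
            (block_mx (Gamma_bar - Delta^T *m invmx (Omega_bar Omega) *m Delta) 0
                      0 (Omega_bar Omega)) nu)
    (* density f_Q of Q_{U1} *)
    (fQ : R -> R) (hfQm : measurable_fun [set: R] fQ) (hfQ0 : forall v, 0 <= fQ v)
    (hfQ : forall B : set R, measurable B ->
        P' ((fun t => ((dsubmx (W t))^T *m invmx (Omega_bar Omega) *m dsubmx (W t)) 0 0)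
              @^-1` B)
        = (\int[@lebesgue_measure R]_(v in B) (fQ v)%:E)%E)
    (* g v = P(U0* < Lambda U1 + tau | Q_{U1} = v), a version of the conditional probability *)
    (g : R -> R) (hgm : measurable_fun [set: R] g)
    (hg : forall B : set R, measurable B ->
        P' ([set t | forall i, (usubmx (W t)) i 0 <
               (Delta^T *m invmx (Omega_bar Omega) *m dsubmx (W t) + tau) i 0]
            `&` (fun t => ((dsubmx (W t))^T *m invmx (Omega_bar Omega) *m dsubmx (W t)) 0 0)
              @^-1` B)
        = (\int[@lebesgue_measure R]_(v in B) (g v * fQ v)%:E)%E) :
  (* Q_Y has density f_{Q_Y}(v) = f_Q(v) g(v) / P(U0* < Lambda U1 + tau) for v > 0 *)
  forall B : set R, measurable B ->
    P ((fun t => ((Y t - xi)^T *m invmx Omega *m (Y t - xi)) 0 0) @^-1` B)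
    = (\int[@lebesgue_measure R]_(v in B)
         (if 0 < v then
            fQ v * g v /
              fine (P' [set t | forall i, (usubmx (W t)) i 0 <
                       (Delta^T *m invmx (Omega_bar Omega) *m dsubmx (W t) + tau) i 0])
          else 0)%:E)%E.
Proof.
move=> B mB.
have [rvW hW2] := hW.
move: hY; rewrite /has_SUT_law /= => -[_ hY2].
pose Mx' := @Mx R d m Omega Delta.
pose QW := fun b : 'cV[R]_d => (b^T *m invmx (Omega_bar Omega) *m b) 0 0.
pose A' : set 'cV[R]_(m + d) := [set w | forall i, usubmx w i 0 <
   (Delta^T *m invmx (Omega_bar Omega) *m dsubmx w + tau) i 0].
pose EB := fun B : set R => A' `&` [set w | B (QW (dsubmx w))].
pose fW := t_density (0 : 'cV[R]_(m + d)) (@Dm R d m Omega Delta Gamma_bar) nu.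
pose f := t_density (0 : 'cV[R]_(m + d)) (Omega_star Omega Delta Gamma_bar) nu.
have mfW : measurable_fun setT (fW : Vec R (m + d) -> R) by exact: mtd.
have mA' : measurable (A' : set (Vec R (m + d))).
  have -> : A' = \bigcap_(i in [set: 'I_m]) [set w : Vec R (m + d) | usubmx w i 0 <
      (Delta^T *m invmx (Omega_bar Omega) *m dsubmx w + tau) i 0].
    by apply/seteqP; split => w /= h i; [move=> _; exact: h | exact: h].
  apply: fin_bigcap_measurable; first exact: finite_finset.
  move=> i _.
  have mF : measurable_fun setT (fun w : Vec R (m + d) => usubmx w i 0).
    apply: mcoordf; exact: musub.
  have mG : measurable_fun setT (fun w : Vec R (m + d) =>
      (Delta^T *m invmx (Omega_bar Omega) *m dsubmx w + tau) i 0).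
    apply: mcoordf; apply: maddc; apply: mmul; exact: mdsub.
  have h := measurable_funB mG mF measurableT (measurable_itv `]0%R, +oo[).
  rewrite setTI in h.
  have -> : [set w : Vec R (m + d) | usubmx w i 0 <
      (Delta^T *m invmx (Omega_bar Omega) *m dsubmx w + tau) i 0] =
      (fun w : Vec R (m + d) => (Delta^T *m invmx (Omega_bar Omega) *m dsubmx w + tau) i 0
         - usubmx w i 0) @^-1` `]0%R, +oo[.
    by apply/seteqP; split => w /=; rewrite in_itv /= andbT subr_gt0.
  exact: h.
have mQW : measurable_fun setT (fun w : Vec R (m + d) => QW (dsubmx w)).
  by apply: mquad; exact: mdsub.
have mEB : forall B, measurable B -> measurable (EB B : set (Vec R (m + d))).
  move=> B' mB'; apply: measurableI => //.
  have h := mQW measurableT B' mB'; rewrite setTI in h; exact h.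
have key : forall S : set (Vec R (m + d)), measurable S ->
   iint (fun u : 'cV[R]_(m + d) => ((\1_([set u | S (Mx' *m u)]) u : R) * f u)%:E)
   = P' (W @^-1` S).
  move=> S mS; rewrite (hW2 S mS).
  pose h := fun w : Vec R (m + d) => ((\1_S w : R) * fW w)%:E.
  have mh : measurable_fun setT h.
    apply/measurable_EFinP; apply: measurable_funM => //; exact: measurable_indic.
  have h0 : forall z, (0 <= h z)%E.
    by move=> z; rewrite lee_fin mulr_ge0 ?td_ge0 // ltW.
  rewrite -(@iint_cov R m d (@Lam R d m Omega Delta) h mh h0).
  congr iint; apply/funext => u.
  rewrite /h -Mx_col /f (@t_density_cov R d m Omega Delta Gamma_bar hOmega hstar).
  by congr ((_ * _)%:E).
have hA : forall u : 'cV[R]_(m + d), A' (Mx' *m u) <-> (forall i, 0 < (usubmx u + tau) i 0).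
  move=> u; rewrite /A' /Mx' /= Mx_col col_mxKu col_mxKd /Lam.
  by split => hh i; move: (hh i); rewrite !mxE; lra.
pose BY : set 'cV[R]_d := [set y | B (((y - xi)^T *m invmx Omega *m (y - xi)) 0 0)].
have hB : forall u : 'cV[R]_(m + d),
    (xi + omega_mx Omega *m dsubmx u \in BY) <-> B (QW (dsubmx u)).
  by move=> u; rewrite in_setE /BY /= quad_Y.
have mBY : mxBorel BY.
  have mq : measurable_fun setT (fun y : Vec R d => ((y - xi)^T *m invmx Omega *m (y - xi)) 0 0).
    by apply: mquad; apply: msubc; exact: measurable_id.
  have h := mq measurableT B mB; rewrite setTI in h; exact h.
have -> : (fun t : T => ((Y t - xi)^T *m invmx Omega *m (Y t - xi)) 0 0) @^-1` B =
  Y @^-1` BY by [].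
rewrite (hY2 BY mBY).
have EC : [set u : 'cV[R]_(m + d) | forall i, 0 < (usubmx u + tau) i 0]
    `&` [set u | xi + omega_mx Omega *m dsubmx u \in BY] = [set u | EB B (Mx' *m u)].
  apply/seteqP; split => u /=.
    move=> [h1 h2]; split; first exact/hA.
    rewrite /= Mx_col col_mxKd; by apply/hB.
  move=> [h1 h2]; split; first exact/hA.
  move: h2; rewrite /= Mx_col col_mxKd => h2; by apply/hB.
have EC1 : [set u : 'cV[R]_(m + d) | forall i, 0 < (usubmx u + tau) i 0] =
    [set u | EB setT (Mx' *m u)].
  apply/seteqP; split => u /=.
    by move=> h1; split => //; exact/hA.
  by move=> [h1 _]; exact/hA.
rewrite EC EC1 !key //; try exact: mEB.
have hPW : forall D, measurable D ->
    P' (W @^-1` EB D) = (\int[@lebesgue_measure R]_(v in D) (g v * fQ v)%:E)%E.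
  by move=> D mD; rewrite -hg.
have EA : [set t | forall i, (usubmx (W t)) i 0 <
     (Delta^T *m invmx (Omega_bar Omega) *m dsubmx (W t) + tau) i 0] = W @^-1` EB setT.
  by apply/seteqP; split => t /=; [move=> h1; split | case].
rewrite EA !hPW //.
apply: final_step => //.
- by move=> D mD; rewrite -hPW //; exact: measure_ge0.
- move=> D mD; rewrite -hPW //.
  apply: (le_lt_trans (probability_le1 _ _)); last exact: ltry.
  by apply: rvW; exact: mEB.
move=> D mD; rewrite -!hPW //; last first.
  by apply: measurableI => //; exact: measurable_itv.
set D' := (X in _ = P' (W @^-1` EB X)).
have mX : measurable (W @^-1` EB D) by apply: rvW; exact: mEB.
have mD' : measurable D'.
  rewrite /D'; apply: measurableI => //; exact: measurable_itv.
have mY : measurable (W @^-1` EB D') by apply: rvW; exact: mEB.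
have YX : W @^-1` EB D' `<=` W @^-1` EB D.
  by move=> t [h1 [h2 _]]; split.
rewrite (measureDI P' mX mY) (setIidr YX).
pose Z := (fun t => ((dsubmx (W t))^T *m invmx (Omega_bar Omega) *m dsubmx (W t)) 0 0)
   @^-1` [set 0%R].
have mZ : measurable Z.
  have h := mQW measurableT [set 0%R] (measurable_set1 _); rewrite setTI in h.
  exact: (rvW _ h).
have PZ : P' Z = 0%E.
  rewrite /Z hfQ //; apply: null_set_integral => //.
    exact/measurable_EFinP/measurable_funTS.
  exact: lebesgue_measure_set1.
rewrite [X in (X + _)%E](_ : _ = 0%E) ?add0e //.
  apply/eqP; rewrite eq_le measure_ge0 andbT -PZ.
  apply: le_measure; rewrite ?inE //; first exact: measurableD.
  move=> t [[h1 h2] h3]; rewrite /Z /=.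
  have q0 := @quad_ge0 R d Omega hOmega (dsubmx (W t)).
  apply/eqP; rewrite eq_le q0 andbT leNgt; apply/negP => qpos.
  apply: h3; split => //; split => //=.
  by rewrite in_itv /= andbT.
Qed.
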